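(* Let $\mathcal C\subseteq 2^{[n]}$ be an inductively pierced code, and suppose $G(\mathcal C)$ contains a clique of size $k+1$. Then $\mathcal C$ does not have a well-formed realization by open balls in $\mathbb R^{k-1}$.
   Context: A code is a set $\mathcal C\subseteq 2^{[n]}$, $[n]=\{1,\dots,n\}$. Standing conventions: $\emptyset\in\mathcal C$; every neuron lies in some codeword; no two distinct neurons lie in exactly the same codewords. $\mathcal C\setminus i$ is obtained by removing $i$ from every codeword. For $\alpha\subseteq\beta$, $[\alpha,\beta]=\{\gamma:\alpha\subseteq\gamma\subseteq\beta\}$, of rank $|\beta\setminus\alpha|$. A neuron $i$ is a $k$-piercing of $\mathcal C$ if there are $\sigma\subseteq\tau\subseteq[n]\setminus\{i\}$ with $[\sigma,\tau]$ of rank $k$, $[\sigma,\tau]\subseteq\mathcal C\setminus i$, and $\mathcal C=(\mathcal C\setminus i)\cup[\sigma\cup\{i\},\tau\cup\{i\}]$. A code is $k$-inductively pierced if $\mathcal C=\{\emptyset\}$, or some neuron $i$ is a $k'$-piercing for some $k'\le k$ and $\mathcal C\setminus i$ is $k$-inductively pierced; inductively pierced means $k$-inductively pierced for some $k$. A pseudo-monomial is $\prod_{a\in\alpha}x_a\prod_{b\in\beta}(1-x_b)\in\mathbb F_2[x_1,\dots,x_n]$ with $\alpha\cap\beta=\emptyset$, ordered by divisibility; $J_\mathcal C=\langle\rho_\gamma:\gamma\notin\mathcal C\rangle$ with $\rho_\gamma=\prod_{a\in\gamma}x_a\prod_{b\notin\gamma}(1-x_b)$, and $\mathrm{CF}(J_\mathcal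 C)$ is its set of minimal pseudo-monomials (for inductively pierced codes all have degree two). $G(\mathcal C)$ is the graph on $[n]$ with edge $ab$ whenever $\mathrm{CF}(J_\mathcal C)$ contains no pseudo-monomial in the variables $x_a,x_b$. Sets $U_1,\dots,U_n\subseteq\mathbb R^d$ realize $\mathcal C$ if $\mathcal C=\{\gamma:\bigcap_{i\in\gamma}U_i\setminus\bigcup_{j\notin\gamma}U_j\ne\emptyset\}$. A collection of $(d-1)$-spheres in $\mathbb R^d$ is well-formed if for every $m\le d$ the intersection of any $m$ of them is empty or a $(d-m)$-dimensional sphere, and the intersection of any $d+1$ of them is empty; open balls are well-formed if their boundary spheres are. *)

(* Defs.v *)
From HB Require Import structures.
From mathcomp Require Import all_boot all_algebra.
From mathcomp Require Import mpoly.
From mathcomp Require Import reals.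
Set Implicit Arguments. Unset Strict Implicit. Unset Printing Implicit Defensive.
Import GRing.Theory Num.Theory.

Definition code (n : nat) := {set {set 'I_n}}.

Definition standing_conventions (n : nat) (C : code n) : Prop :=
  [/\ set0 \in C,
      (forall i : 'I_n, exists2 g, g \in C & i \in g)
    & (forall i j : 'I_n, (forall g, g \in C -> (i \in g) = (j \in g)) -> i = j)].

(* C \ i : remove neuron i from every codeword.  (We keep the ambient index
   type 'I_n; neuron i simply no longer occurs.) *)
Definition code_del (n : nat) (C : code n) (i : 'I_n) : code n :=
  [set g :\ i | g in C].

Definition interval (n : nat) (s t : {set 'I_n}) : code n :=
  [set g : {set 'I_n} | (s \subset g) && (g \subset t)].

Definition piercing (n : nat) (C : code n) (i : 'I_n) (k : nat) : Prop :=
  exists s t : {set 'I_n},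
    [/\ s \subset t, i \notin t, #|t :\: s| = k,
        interval s t \subset code_del C i
      & C = code_del C i :|: interval (i |: s) (i |: t)].

Inductive k_ind_pierced (n : nat) (k : nat) : code n -> Prop :=
  | kip_triv : k_ind_pierced k [set set0]
  | kip_step (C : code n) (i : 'I_n) (k' : nat) :
      (k' <= k)%N -> piercing C i k' -> k_ind_pierced k (code_del C i) ->
      k_ind_pierced k C.

Definition ind_pierced (n : nat) (C : code n) : Prop :=
  exists k, k_ind_pierced k C.

Local Open Scope ring_scope.

Definition pmono (n : nat) (al be : {set 'I_n}) : {mpoly 'F_2[n]} :=
  (\prod_(a in al) 'X_a) * \prod_(b in be) (1 - 'X_b).

Definition is_pseudo_monomial (n : nat) (f : {mpoly 'F_2[n]}) : Prop :=
  exists al be : {set 'I_n}, [disjoint al & be] /\ f = pmono al be.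

Definition rho (n : nat) (g : {set 'I_n}) : {mpoly 'F_2[n]} := pmono g (~: g).

Definition in_neural_ideal (n : nat) (C : code n) (f : {mpoly 'F_2[n]}) : Prop :=
  exists h : {set 'I_n} -> {mpoly 'F_2[n]},
    f = \sum_(g : {set 'I_n} | g \notin C) h g * rho g.

Definition mdvd (n : nat) (f g : {mpoly 'F_2[n]}) : Prop :=
  exists h : {mpoly 'F_2[n]}, g = h * f.

Definition in_CF (n : nat) (C : code n) (f : {mpoly 'F_2[n]}) : Prop :=
  [/\ is_pseudo_monomial f, in_neural_ideal C f
    & forall g, is_pseudo_monomial g -> in_neural_ideal C g -> mdvd g f ->
        g = f].

Definition G_edge (n : nat) (C : code n) (a b : 'I_n) : Prop :=
  a <> b /\
  ~ exists al be : {set 'I_n},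
      [/\ [disjoint al & be], al :|: be = [set a; b] & in_CF C (pmono al be)].

Definition G_clique (n : nat) (C : code n) (K : {set 'I_n}) : Prop :=
  forall a b, a \in K -> b \in K -> a <> b -> G_edge C a b.

Definition sqdist (R : realType) (d : nat) (x y : 'rV[R]_d) : R :=
  \sum_(i < d) (x 0 i - y 0 i) ^+ 2.

Definition is_sphere (R : realType) (d j : nat) (S : 'rV[R]_d -> Prop) : Prop :=
  exists (c : 'rV[R]_d) (r : R) (V : 'M[R]_d),
    [/\ 0 < r, \rank V = j.+1
      & forall x, S x <-> ((x - c) <= V)%MS /\ sqdist x c = r ^+ 2].

Definition sphere_inter (R : realType) (d n : nat) (c : 'I_n -> 'rV[R]_d)
  (r : 'I_n -> R) (S : {set 'I_n}) : 'rV[R]_d -> Prop :=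
  fun x => forall i, i \in S -> sqdist x (c i) = r i ^+ 2.

Definition well_formed_balls (R : realType) (d n : nat) (c : 'I_n -> 'rV[R]_d)
  (r : 'I_n -> R) : Prop :=
  (forall S : {set 'I_n}, (1 <= #|S|)%N -> (#|S| <= d)%N ->
     (forall x, ~ sphere_inter c r S x) \/ is_sphere (d - #|S|) (sphere_inter c r S))
  /\ (forall S : {set 'I_n}, #|S| = d.+1 -> forall x, ~ sphere_inter c r S x).

Definition balls_realize (R : realType) (d n : nat) (C : code n)
  (c : 'I_n -> 'rV[R]_d) (r : 'I_n -> R) : Prop :=
  forall g : {set 'I_n},
    g \in C <->
    exists x : 'rV[R]_d,
      (forall i, i \in g -> sqdist x (c i) < r i ^+ 2) /\
      (forall j, j \notin g -> ~ (sqdist x (c j) < r j ^+ 2)).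

Definition has_wf_ball_realization (R : realType) (d n : nat) (C : code n) : Prop :=
  exists (c : 'I_n -> 'rV[R]_d) (r : 'I_n -> R),
    [/\ forall i, 0 < r i, balls_realize C c r & well_formed_balls c r].

(* Main.v *)
Require Import Defs.
From HB Require Import structures.
From mathcomp Require Import all_boot all_algebra.
From mathcomp Require Import mpoly.
From mathcomp Require Import reals.
From mathcomp Require Import all_order ring.

Module Helpers.
Set Implicit Arguments. Unset Strict Implicit. Unset Printing Implicit Defensive.
Import Order.TTheory GRing.Theory Num.Theory.

Lemma disjP' (T : finType) (A B : {set T}) :
  reflect (forall x, x \in A -> x \notin B) [disjoint A & B].
Proof.
rewrite disjoint_subset; apply: (iffP subsetP) => H x /H; by rewrite inE.
Qed.

Lemma disjU1 (T : finType) (j : T) (A B : {set T}) :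
  [disjoint B & j |: A] = (j \notin B) && [disjoint B & A].
Proof.
apply/disjP'/andP => [H|[jB H] x xB].
  split; first by apply/negP => /H; rewrite !inE eqxx.
  by apply/disjP' => x /H; rewrite !inE negb_or => /andP[].
rewrite !inE negb_or (disjP' _ _ H x xB) andbT.
by apply: contraNneq jB => <-.
Qed.

Section Alg.
Local Open Scope ring_scope.
Variable n : nat.

Definition ind (z : {set 'I_n}) : 'I_n -> 'F_2 := fun j => (j \in z)%:R.

Lemma prod_bool (A : {set 'I_n}) (P : 'I_n -> bool) :
  \prod_(i in A) ((P i)%:R : 'F_2) = [forall i in A, P i]%:R.
Proof.
case: forallP => H /=.
  by rewrite big1 // => i iA; rewrite (implyP (H i) iA).
have /existsP[i /andP[iA nPi]] : [exists i, (i \in A) && ~~ P i].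
  apply: contraT => /existsPn Hn; exfalso; apply: H => i.
  by have := Hn i; rewrite negb_and negbK; case: (i \in A).
by rewrite (bigD1 i) //= (negbTE nPi) mul0r.
Qed.

Lemma meval_pmono (al be z : {set 'I_n}) :
  meval (ind z) (pmono al be) = ((al \subset z) && [disjoint be & z])%:R.
Proof.
rewrite /pmono mevalM !rmorph_prod /=.
rewrite (eq_bigr (fun i => ((i \in z) : bool)%:R)); last by move=> i _; rewrite mevalXU.
rewrite [X in _ * X](eq_bigr (fun i => (~~ (i \in z))%:R)); last first.
  by move=> i _; rewrite mevalB meval1 mevalXU /ind; case: (i \in z); rewrite ?subr0 ?subrr.
rewrite !prod_bool -natrM /=.
rewrite mulnb; congr ((nat_of_bool _)%:R); congr andb.
  by apply/forallP/subsetP => H x; move: (H x) => /implyP.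
by apply/forallP/disjP' => H x; move: (H x) => /implyP.
Qed.


Lemma in_J_vanish (C : code n) f c :
  in_neural_ideal C f -> c \in C -> meval (ind c) f = 0.
Proof.
move=> [h ->] cC; rewrite raddf_sum /= big1 // => g gC.
rewrite mevalM /rho meval_pmono.
case: andP => [[gc dg]|_]; last by rewrite mulr0.
suff gce : g = c by rewrite gce cC in gC.
apply/eqP; rewrite eqEsubset gc /=; apply/subsetP => x xc.
apply: contraT => xg; have := disjP' _ _ dg x; rewrite inE xg xc; by move/(_ isT).
Qed.

Lemma pmono_split (al be : {set 'I_n}) (j : 'I_n) : j \notin al -> j \notin be ->
  pmono al be = pmono (j |: al) be + pmono al (j |: be).
Proof.
move=> ja jb; rewrite /pmono !big_setU1 //=.
set A := \prod_(i in al) _; set B := \prod_(i in be) _.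
ring.
Qed.

Lemma pmono_expand m (al be : {set 'I_n}) : #|~: (al :|: be)| = m -> [disjoint al & be] ->
  pmono al be = \sum_(v : {set 'I_n} | (al \subset v) && [disjoint v & be]) rho v.
Proof.
elim: m al be => [|m IH] al be cm dab.
  have ebe : be = ~: al.
    move/eqP: cm; rewrite cards_eq0 => /eqP cov0.
    have cov : al :|: be = setT by rewrite -[_ :|: _]setCK cov0 setC0.
    apply/setP => x; rewrite inE; have := disjP' _ _ dab x.
    have : x \in al :|: be by rewrite cov inE.
    by rewrite inE; case: (x \in al); case: (x \in be) => //= _ /(_ isT).
  rewrite (big_pred1 al); first by rewrite /rho ebe.
  move=> v /=; rewrite ebe.
  rewrite disjoint_subset; apply/andP/eqP => [[s1 s2]|->]; last by rewrite subxx; split => //; apply/subsetP => x; rewrite !inE negbK.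
  apply/eqP; rewrite eqEsubset s1 andbT; apply/subsetP => x /(subsetP s2); by rewrite !inE negbK.
have [j jn] : exists j, j \in ~: (al :|: be).
  by apply/set0Pn; rewrite -card_gt0 cm.
move: (jn); rewrite !inE negb_or => /andP[ja jb].
have c1 : #|~: ((j |: al) :|: be)| = m.
  apply/eqP; rewrite -eqSS -cm (cardsD1 j (~: (al :|: be))) jn add1n eqSS; apply/eqP; apply: eq_card => x.
  by rewrite !inE; case: (x == j); case: (x \in al); case: (x \in be).
have c2 : #|~: (al :|: (j |: be))| = m.
  apply/eqP; rewrite -eqSS -cm (cardsD1 j (~: (al :|: be))) jn add1n eqSS; apply/eqP; apply: eq_card => x.
  by rewrite !inE; case: (x == j); case: (x \in al); case: (x \in be).
have d1 : [disjoint j |: al & be].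
  apply/disjP' => x; rewrite !inE => /orP[/eqP->|xa] //; exact: (disjP' _ _ dab).
have d2 : [disjoint al & j |: be].
  apply/disjP' => x; rewrite !inE => xa; apply/norP; split; last exact: (disjP' _ _ dab).
  by apply: contraTneq xa => ->.
rewrite (pmono_split ja jb) (IH _ _ c1 d1) (IH _ _ c2 d2).
rewrite [in RHS](bigID (fun v : {set 'I_n} => j \in v)) /=; congr (_ + _); apply: eq_bigl => v.
  by rewrite subUset sub1set; case: (j \in v); rewrite ?andbT ?andbF.
by rewrite disjU1; case: (al \subset v); case: (j \in v); case: [disjoint v & be].
Qed.


Lemma vanish_in_J (C : code n) (al be : {set 'I_n}) : [disjoint al & be] ->
  (forall c, c \in C -> ~~ ((al \subset c) && [disjoint c & be])) ->
  in_neural_ideal C (pmono al be).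
Proof.
move=> dab H; exists (fun v : {set 'I_n} => (((al \subset v) && [disjoint v & be])%:R : {mpoly 'F_2[n]})).
rewrite (pmono_expand (erefl _) dab) [RHS]big_mkcond [LHS]big_mkcond /=.
apply: eq_bigr => v _.
case Pv: (_ && _) => /=.
  have vC : v \notin C by apply: contraT => /negPn /H; rewrite Pv.
  by rewrite vC mul1r.
by case: (v \in C); rewrite //= mul0r.
Qed.

Lemma evalE1 (h : 'F_2) (b : bool) : 1 = h * (b%:R) -> b.
Proof. by case: b => //=; rewrite mulr0 => /eqP; rewrite oner_eq0. Qed.

Lemma mdvd_sub (al be al' be' : {set 'I_n}) :
  mdvd (pmono al' be') (pmono al be) -> [disjoint al & be] ->
  al' \subset al /\ be' \subset be.
Proof.
move=> [h E] dab.
have /evalE1/andP[s1 d1] : 1 = meval (ind al) h * ((al' \subset al) && [disjoint be' & al])%:R.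
  by rewrite -meval_pmono -mevalM -E meval_pmono subxx disjoint_sym dab.
have /evalE1/andP[s2 d2] : 1 = meval (ind (~: be)) h * ((al' \subset ~: be) && [disjoint be' & ~: be])%:R.
  rewrite -meval_pmono -mevalM -E meval_pmono.
  have -> : al \subset ~: be by apply/subsetP => x xa; rewrite inE (disjP' _ _ dab x xa).
  by have -> : [disjoint be & ~: be] by apply/disjP' => x; rewrite inE negbK.
split => //; apply/subsetP => x xb; have := disjP' _ _ d2 x xb; by rewrite inE negbK.
Qed.

Lemma J_not (C : code n) (al' be' c : {set 'I_n}) :
  in_neural_ideal C (pmono al' be') -> c \in C -> al' \subset c ->
  [disjoint be' & c] -> False.
Proof.
move=> J cC s d; move: (in_J_vanish J cC); rewrite meval_pmono s d /= => /eqP.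
by rewrite oner_eq0.
Qed.

Lemma disj0 (A : {set 'I_n}) : [disjoint A & set0].
Proof. by apply/disjP' => x; rewrite inE. Qed.
Lemma disj0' (A : {set 'I_n}) : [disjoint set0 & A].
Proof. by apply/disjP' => x; rewrite inE. Qed.

Lemma CF11 (C : code n) a b : standing_conventions C ->
  (forall g, g \in C -> ~~ ((a \in g) && (b \in g))) ->
  in_CF C (pmono [set a; b] set0).
Proof.
move=> [C0 Cf _] H; split.
- by exists [set a; b], set0; split => //; apply: disj0.
- apply: vanish_in_J; first exact: disj0.
  by move=> c cC; rewrite subUset !sub1set disj0 !andbT; apply: H.
move=> g [al' [be' [d' ->]]] Jg dv.
have [s1 s2] := mdvd_sub dv (disj0 _).
have be0 : be' = set0 by apply/eqP; rewrite -subset0.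
subst be'.
case abl: ((a \in al') && (b \in al')).
  move/andP: abl => [aa ba].
  suff -> : al' = [set a; b] by [].
  by apply/eqP; rewrite eqEsubset s1 subUset !sub1set aa ba.
exfalso; move/negbT: abl; rewrite negb_and => /orP[na|nb].
  have [c cC bc] := Cf b.
  apply: (J_not Jg cC _ (disj0' _)); apply/subsetP => x xa.
  have := subsetP s1 x xa; rewrite !inE => /orP[/eqP xe|/eqP ->] //.
  by rewrite -xe xa in na.
have [c cC ac] := Cf a.
apply: (J_not Jg cC _ (disj0' _)); apply/subsetP => x xa.
have := subsetP s1 x xa; rewrite !inE => /orP[/eqP ->|/eqP xe] //.
by rewrite -xe xa in nb.
Qed.

Lemma CF10 (C : code n) a b : standing_conventions C -> a != b ->
  (forall g, g \in C -> ~~ ((a \in g) && (b \notin g))) ->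
  in_CF C (pmono [set a] [set b]).
Proof.
move=> [C0 Cf _] ab H.
have dab : [disjoint [set a] & [set b]].
  by apply/disjP' => x; rewrite !inE => /eqP ->.
split.
- by exists [set a], [set b].
- apply: vanish_in_J => // c cC; rewrite sub1set.
  have -> : [disjoint c & [set b]] = (b \notin c).
    apply/disjP'/idP => [D|D x xc]; first by apply/negP => /D; rewrite inE eqxx.
    by rewrite inE; apply: contraNneq D => <-.
  exact: H.
move=> g [al' [be' [d' ->]]] Jg dv.
have [s1 s2] := mdvd_sub dv dab.
move: s1 s2 Jg; rewrite !subset1 => /orP[/eqP->|/eqP->] /orP[/eqP->|/eqP->] Jg //; exfalso.
- have [c cC ac] := Cf a.
  by apply: (J_not Jg cC _ (disj0' _)); rewrite sub1set.
- by apply: (J_not Jg C0); [apply/subsetP => x; rewrite inE | apply: disj0].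
- by apply: (J_not Jg C0); [apply/subsetP => x; rewrite inE | apply: disj0].
Qed.

Lemma edge_pat (C : code n) a b : standing_conventions C -> G_edge C a b ->
  (exists2 g, g \in C & (a \in g) && (b \in g)) /\
  (exists2 g, g \in C & (a \in g) && (b \notin g)).
Proof.
move=> st [ab ne]; split.
  case: (boolP [exists g in C, (a \in g) && (b \in g)]) => [/exists_inP//|/exists_inPn H].
  exfalso; apply: ne; exists [set a; b], set0; split; first exact: disj0.
    by rewrite setU0.
  exact: CF11.
case: (boolP [exists g in C, (a \in g) && (b \notin g)]) => [/exists_inP//|/exists_inPn H].
exfalso; apply: ne; exists [set a], [set b]; split => //.
  by apply/disjP' => x; rewrite !inE => /eqP ->; apply/eqP => e; apply: ab.
by apply: CF10 => //; apply/eqP.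
Qed.

End Alg.

Lemma kip_patterns n k (C : code n) : k_ind_pierced k C ->
  forall K : {set 'I_n},
  (forall a, a \in K -> exists2 g, g \in C & a \in g) ->
  (forall a b, a \in K -> b \in K -> a != b ->
     (exists2 g, g \in C & (a \in g) && (b \in g)) /\
     (exists2 g, g \in C & (a \in g) && (b \notin g))) ->
  forall P : {set 'I_n}, P \subset K -> exists2 g, g \in C & g :&: K = P.
Proof.
elim=> [|{}C i k' _ [s [t [st it _ sub EC]]] _ IH] K Hf Hp P PK.
  have K0 : K = set0.
    apply/setP => a; rewrite inE; apply/negP => /Hf [g]; rewrite inE => /eqP ->.
    by rewrite inE.
  exists set0; first by rewrite inE.
  by apply/esym/eqP; rewrite set0I -subset0 -K0.
have delC : code_del C i \subset C by rewrite {2}EC subsetUl.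
have delnoti : forall g, g \in code_del C i -> i \notin g.
  by move=> g /imsetP [h _ ->]; rewrite setD11.
have inI : forall g, g \in C -> i \in g -> (i |: s \subset g) && (g \subset i |: t).
  move=> g; rewrite {1}EC inE => /orP[/delnoti/negbTE -> //|].
  by rewrite /interval inE.
case iK: (i \in K).
  have KT : forall j, j \in K -> j != i -> (j \in t) && (j \notin s).
    move=> j jK ji.
    have [[g gC /andP[ig jg]] [g' g'C /andP[ig' jg']]] := Hp i j iK jK (ltac:(by rewrite eq_sym)).
    move: (inI g gC ig) (inI g' g'C ig') => /andP[_ /subsetP gt] /andP[/subsetP sg _].
    apply/andP; split.
      by move: (gt j jg); rewrite !inE (negbTE ji).
    by apply: contraNN jg' => js; apply: sg; rewrite !inE js orbT.
  exists (s :|: P).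
    case iP: (i \in P).
      rewrite EC inE; apply/orP; right; rewrite /interval inE; apply/andP; split.
        by rewrite subUset sub1set !inE iP orbT subsetUl.
      rewrite subUset; apply/andP; split.
        by apply: (subset_trans st); apply: subsetUr.
      apply/subsetP => x xP; rewrite !inE; case: eqP => //= /eqP xi.
      by case/andP: (KT x (subsetP PK x xP) xi).
    apply: (subsetP delC); apply: (subsetP sub); rewrite /interval inE subsetUl /=.
    rewrite subUset st /=; apply/subsetP => x xP.
    have xi : x != i by apply: contraFneq iP => <-.
    by case/andP: (KT x (subsetP PK x xP) xi).
  apply/setP => x; rewrite !inE; case xP: (x \in P); first by rewrite orbT (subsetP PK).
  rewrite orbF; apply/negP => /andP[xs xK].
  case: (eqVneq x i) => [xi|xi].
    by move: it; rewrite -xi (subsetP st x xs).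
  by case/andP: (KT x xK xi) => _; rewrite xs.
have Hf' : forall a, a \in K -> exists2 g, g \in code_del C i & a \in g.
  move=> a aK; have [g gC ag] := Hf a aK.
  exists (g :\ i); first exact: imset_f.
  by rewrite !inE ag andbT; apply: contraTneq aK => ->; rewrite iK.
have Hp' : forall a b, a \in K -> b \in K -> a != b ->
     (exists2 g, g \in code_del C i & (a \in g) && (b \in g)) /\
     (exists2 g, g \in code_del C i & (a \in g) && (b \notin g)).
  move=> a b aK bK ab; have [[g gC gab] [g' g'C gab']] := Hp a b aK bK ab.
  have ai : a != i by apply: contraTneq aK => ->; rewrite iK.
  have bi : b != i by apply: contraTneq bK => ->; rewrite iK.
  split; [exists (g :\ i); first exact: imset_f | exists (g' :\ i); first exact: imset_f].
    by rewrite !inE ai bi.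
  by rewrite !inE ai bi.
have [g gC gP] := IH K Hf' Hp' P PK.
by exists g => //; apply: (subsetP delC).
Qed.

Section Geom.
Local Open Scope ring_scope.
Variable R : realType.

Lemma sign_lemma m (w F : 'I_m -> R) : \sum_j w j = 0 -> (exists j, w j != 0) ->
  (forall j, (F j < 0) = (0 < w j)) -> \sum_j w j * F j < 0.
Proof.
move=> s0 [j0 nz] H.
have [j jp] : exists j, 0 < w j.
  case: (boolP [exists j, 0 < w j]) => [/existsP//|/existsPn H2]; exfalso.
  have Hn : forall i, predT i -> 0 <= - w i by move=> i _; rewrite oppr_ge0 leNgt H2.
  have Hs : \sum_(i | predT i) - w i = 0 by rewrite sumrN s0 oppr0.
  by move: (psumr_eq0P Hn Hs (i:=j0) isT) => /eqP; rewrite oppr_eq0 (negbTE nz).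
rewrite (bigD1 j) //=.
have h1 : w j * F j < 0 by rewrite pmulr_rlt0 // H.
have h2 : \sum_(i | i != j) w i * F i <= 0.
  apply: sumr_le0 => i _; case: (ltP 0 (w i)) => wi.
    by apply: ltW; rewrite pmulr_rlt0 // H.
  by rewrite mulr_le0_ge0 // leNgt H ltNge wi.
by have := ltr_leD h1 h2; rewrite addr0.
Qed.

Lemma sqdist_split d (x y : 'rV[R]_d) :
  sqdist x y = \sum_(l < d) (x 0 l ^+ 2 - (x 0 l * y 0 l) *+ 2) + \sum_(l < d) y 0 l ^+ 2.
Proof. by rewrite /sqdist -big_split /=; apply: eq_bigr => l _; rewrite sqrrB. Qed.


Lemma geom n k (C : code n) (c : 'I_n -> 'rV[R]_(k.-1)) (r : 'I_n -> R)
  (K : {set 'I_n}) :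
  (1 <= k)%N -> #|K| = k.+1 -> balls_realize C c r ->
  (forall P : {set 'I_n}, P \subset K -> exists2 g, g \in C & g :&: K = P) -> False.
Proof.
move=> k1 cK real pat.
pose e : 'I_#|K| -> 'I_n := enum_val.
pose M := \matrix_(j < #|K|, l < (k.-1).+1)
  (if unlift ord0 l is Some l' then c (e j) 0 l' else 1 : R).
have nf : ~~ row_free M.
  apply/negP => /eqP rk; have := rank_leq_col M; by rewrite rk cK prednK // ltnn.
have kn : kermx M != 0 by rewrite kermx_eq0.
have /existsP[j0 /existsP[l0 nz]] : [exists j0, exists l0, kermx M j0 l0 != 0].
  apply: contraNT kn => /existsPn H; apply/eqP/matrixP => a b; rewrite [RHS]mxE.
  by move/existsPn: (H a) => /(_ b)/negPn/eqP.
pose u := row j0 (kermx M).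
pose w := fun j => u 0 j.
have nzw : w l0 != 0 by rewrite /w /u mxE.
have rel : forall l, \sum_j w j * M j l = 0.
  move=> l; have := congr1 (fun A : 'rV[R]_(k.-1).+1 => A 0 l) (row_mul j0 (kermx M) M).
  by rewrite mulmx_ker /= !mxE => /esym.
have s0 : \sum_j w j = 0.
  have := rel ord0; under eq_bigr => j _ do rewrite mxE unlift_none mulr1; done.
have sc : forall l', \sum_j w j * c (e j) 0 l' = 0.
  move=> l'; have := rel (lift ord0 l'); under eq_bigr => j _ do rewrite mxE liftK; done.
pose F := fun (x : 'rV[R]_(k.-1)) j => sqdist x (c (e j)) - r (e j) ^+ 2.
have const : forall x, \sum_j w j * F x j =
    \sum_j w j * (\sum_l c (e j) 0 l ^+ 2 - r (e j) ^+ 2).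
  move=> x; apply/eqP; rewrite -subr_eq0 -sumrB.
  have E : forall a b c0 : R, a + b - c0 - (b - c0) = a by move=> *; ring.
  under eq_bigr => j _ do rewrite -mulrBr /F sqdist_split E mulr_sumr.
  rewrite exchange_big /=; apply/eqP; apply: big1 => l _.
  rewrite (eq_bigr (fun j => x 0 l ^+ 2 * w j - (x 0 l * (w j * c (e j) 0 l)) *+ 2)); last first.
    by move=> j _; ring.
  by rewrite sumrB -mulr_sumr s0 mulr0 sub0r sumrMnl -mulr_sumr sc mulr0 mul0rn oppr0.
have pt : forall s : 'I_#|K| -> R, exists x, forall j, (F x j < 0) = (0 < s j).
  move=> s.
  have [g gC gK] := pat [set e j | j in [set j | 0 < s j]]
    (ltac:(by apply/subsetP => y /imsetP[j _ ->]; exact: enum_valP)).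
  have [x [xin xout]] := (real g).1 gC.
  exists x => j; rewrite /F subr_lt0.
  have ejg : (e j \in g) = (0 < s j).
    have <- : (e j \in g :&: K) = (e j \in g) by rewrite inE enum_valP andbT.
    by rewrite gK mem_imset ?inE //; exact: enum_val_inj.
  rewrite -ejg; case: (boolP (e j \in g)) => h; first by rewrite (xin _ h).
  by apply/negP => H; apply: (xout _ h H).
have [x1 H1] := pt w.
have [x2 H2] := pt (fun j => - w j).
have L1 := sign_lemma s0 (ex_intro _ l0 nzw) H1.
have s0' : \sum_j - w j = 0 by rewrite sumrN s0 oppr0.
have nzw' : - w l0 != 0 by rewrite oppr_eq0.
have L2 := sign_lemma s0' (ex_intro _ l0 nzw') H2.
rewrite const in L1.
have L2' : \sum_j - (w j * F x2 j) < 0.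
  by rewrite (eq_bigr (fun j => (- w j) * F x2 j)) // => j _; rewrite mulNr.
rewrite sumrN oppr_lt0 const in L2'.
by have := lt_trans L2' L1; rewrite ltxx.
Qed.

End Geom.

End Helpers.
Import Helpers.

Theorem lemma3p7 (R : realType) (n k : nat) (C : code n) :
  standing_conventions C ->
  ind_pierced C ->
  (1 <= k)%N ->
  (exists K : {set 'I_n}, #|K| = k.+1 /\ G_clique C K) ->
  ~ has_wf_ball_realization R k.-1 C.
Proof.
move=> st [kk Hkip] k1 [K [cK cl]] [c [r [rpos real _]]].
have [C0 Cf _] := st.
apply: (geom k1 cK real).
apply: (kip_patterns Hkip).
- by move=> a aK; exact: Cf a.
- move=> a b aK bK ab; apply: (edge_pat st); apply: (cl a b aK bK).
  by apply/eqP.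
Qed.
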